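(* Let $G$ be a finite group (written additively, not necessarily abelian), let $f:G\to G$, and let $S\subseteq G$ with $\#S=k\ge u(f)$. For each function $g:G\to G$ satisfying (a) $\mathrm{Im}(g)=S$ and (b) $g(x)\ne g(y)$ whenever $x\ne y$ and $f(x)=f(y)$, let $\mathcal{A}_g=\{(r,c)\in G\times \mathrm{Im}(f): \exists x\in G \text{ with } f(x)=c,\ g(x)+f(x)=r\}$. Then $g\mapsto \mathcal{A}_g$ maps the set of functions satisfying (a) and (b) onto the set of all admissible subtables of $M_f$ with value set $S$, and each admissible subtable with value set $S$ is the image of exactly $\prod_{t=1}^{u(f)} (t!)^{\#P_t}$ such functions $g$. Moreover, if two such functions $g,h$ have $\mathcal{A}_g=\mathcal{A}_h$, then $\mathrm{Im}(g)=\mathrm{Im}(h)$ and $\mathrm{Im}(g+f)=\mathrm{Im}(h+f)$.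
   Context: For $f:G\to G$: $\mathrm{Im}(f)=\{f(x):x\in G\}$; $\mathrm{Preim}(f,b)=\{x\in G: f(x)=b\}$; $u(f)=\max_{b\in G}\#\mathrm{Preim}(f,b)$; for $0\le t\le u(f)$, $P_t=\{b\in G:\#\mathrm{Preim}(f,b)=t\}$. The subtraction table $M_f$ has rows indexed by $G$ and columns indexed by $\mathrm{Im}(f)$, with entry $m_{r,c}=r-c$ (i.e. $r+(-c)$) in position $(r,c)$. A subtable is any set $\mathcal{A}$ of positions $(r,c)\in G\times\mathrm{Im}(f)$ (the entry at that position being $m_{r,c}$). A subtable $\mathcal{A}$ is an admissible subtable with value set $S$ if (A1) $\{m_{r,c}:(r,c)\in\mathcal{A}\}=S$, and (A2) for every $c\in\mathrm{Im}(f)$ there are exactly $\#\mathrm{Preim}(f,c)$ elements $r\in G$ with $(r,c)\in\mathcal{A}$. Functions $g+f$ are taken pointwise. *)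

(* Defs.v *)
(* G is a finite group, modelled as the whole of a
   finGroupType gT; the paper's additive notation x + y is written x * y,
   -c is c^-1, so r - c = r + (-c) is r * c^-1. *)
From mathcomp Require Import all_boot all_fingroup.
Set Implicit Arguments. Unset Strict Implicit. Unset Printing Implicit Defensive.
Local Open Scope group_scope.

Section Defs.
Variable gT : finGroupType.

Definition Im (f : gT -> gT) : {set gT} := [set f x | x : gT].
Definition Preim (f : gT -> gT) (b : gT) : {set gT} := [set x | f x == b].
Definition u (f : gT -> gT) : nat := \max_(b : gT) #|Preim f b|.
Definition Pt (f : gT -> gT) (t : nat) : {set gT} :=
  [set b | #|Preim f b| == t].
(* entry m_{r,c} = r - c = r + (-c) *)
Definition mentry (r c : gT) : gT := r * c^-1.

Definition admissible (f : gT -> gT) (A : {set gT * gT}) (S : {set gT}) : Prop :=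
  [/\ A \subset setX [set: gT] (Im f),
      [set mentry p.1 p.2 | p in A] = S &
      forall c, c \in Im f -> #|[set r | (r, c) \in A]| = #|Preim f c| ].

Definition goodg (f : gT -> gT) (S : {set gT}) (g : {ffun gT -> gT}) : bool :=
  (Im g == S) &&
  [forall x, forall y, ((x != y) && (f x == f y)) ==> (g x != g y)].

Definition Ag (f : gT -> gT) (g : {ffun gT -> gT}) : {set gT * gT} :=
  [set p : gT * gT | (p.2 \in Im f) &&
     [exists x, (f x == p.2) && (g x * f x == p.1)]].

End Defs.

(* Main.v *)
Require Import Defs.
From mathcomp Require Import all_boot all_fingroup.
Set Implicit Arguments. Unset Strict Implicit. Unset Printing Implicit Defensive.

Section Count.
Variable gT : finGroupType.
Variable f : gT -> gT.
Variable Dv : gT -> {set gT}.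

Definition PX (X : {set gT}) (g : {ffun gT -> gT}) : bool :=
  [&& [forall x, (x \in X) ==> (g x \in Dv (f x))],
      [forall x, (x \notin X) ==> (g x == 1%g)] &
      [forall x, forall y, [&& x \in X, y \in X, x != y & f x == f y] ==> (g x != g y)]].

Lemma PXP (X : {set gT}) (g : {ffun gT -> gT}) : reflect
  [/\ (forall x, x \in X -> g x \in Dv (f x)),
      (forall x, x \notin X -> g x = 1%g) &
      (forall x y, x \in X -> y \in X -> x != y -> f x = f y -> g x != g y)]
  (PX X g).
Proof.
apply: (iffP and3P) => [[/forallP H1 /forallP H2 /forallP H3]|[H1 H2 H3]]; split.
- by move=> x xX; have := H1 x; rewrite xX.
- by move=> x xX; have := H2 x; rewrite xX => /eqP.
- move=> x y xX yX nxy fxy; have /forallP := H3 x => /(_ y).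
  by rewrite xX yX nxy fxy eqxx.
- by apply/forallP=> x; apply/implyP; apply: H1.
- by apply/forallP=> x; apply/implyP=> /H2 ->.
- apply/forallP=> x; apply/forallP=> y; apply/implyP=> /and4P[xX yX nxy /eqP fxy].
  exact: H3.
Qed.

Definition upd (h : {ffun gT -> gT}) (a v : gT) : {ffun gT -> gT} :=
  [ffun x => if x == a then v else h x].

Lemma count_step (X : {set gT}) a : a \in X ->
  #|[set g | PX X g]| =
  (#|[set h | PX (X :\ a) h]| * (#|Dv (f a)| - #|(X :\ a) :&: Preim f (f a)|))%N.
Proof.
move=> aX; set X' := X :\ a.
have aX' : a \notin X' by rewrite !inE eqxx.
rewrite -sum1_card (partition_big (fun g => upd g a 1%g) (fun h => PX X' h)) /=.
  rewrite -sum_nat_const; apply: eq_big => [h|h /PXP[H1 H2 H3]]; first by rewrite inE.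
  idtac.
  set W := X' :&: Preim f (f a).
  set V := Dv (f a) :\: [set h y | y in W].
  have -> : \sum_(g in [set g | PX X g] | upd g a 1%g == h) 1 = #|[set upd h a v | v in V]|.
    rewrite -sum1_card; apply: eq_bigl => g; rewrite !inE.
    apply/idP/idP.
    - case/andP=> /PXP[G1 G2 G3] /eqP rg.
      have -> : g = upd h a (g a).
        apply/ffunP=> x; rewrite !ffunE; case: eqP => [->//|/eqP xa].
        by rewrite -rg ffunE (negbTE xa).
      apply/imsetP; exists (g a) => //.
      rewrite !inE G1 // andbT; apply/imsetP=> [[y]].
      rewrite !inE => /andP[/andP[ya yX] /eqP fy].
      rewrite -rg ffunE (negbTE ya) => /eqP; apply/negP.
      rewrite eq_sym; apply: G3 => //; by rewrite eq_sym.
    - case/imsetP=> v; rewrite !inE => /andP[vW vD] ->.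
      apply/andP; split.
        apply/PXP; split.
        + move=> x xX; rewrite ffunE; case: eqP => [->//|/eqP xa].
          by apply: H1; rewrite !inE xa.
        + move=> x xX; rewrite ffunE; case: eqP => [xa|/eqP xa].
            by rewrite xa aX in xX.
          by apply: H2; rewrite !inE negb_and xX orbT.
        + move=> x y xX yX nxy fxy; rewrite !ffunE.
          case: (x =P a) => [xa|/eqP xa]; case: (y =P a) => [ya|/eqP ya].
          * by rewrite xa ya eqxx in nxy.
          * apply/eqP=> vh; move/negP: vW; apply; apply/imsetP; exists y => //.
            by rewrite !inE ya yX -fxy xa eqxx.
          * apply/eqP=> vh; move/negP: vW; apply; apply/imsetP; exists x => //.
            by rewrite !inE xa xX fxy ya eqxx.
          * by apply: H3 => //; rewrite !inE ?xa ?ya.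
      apply/eqP/ffunP=> x; rewrite !ffunE; case: eqP => [->|//].
      by rewrite H2.
  rewrite card_in_imset; last first.
    move=> v w _ _ /ffunP/(_ a); by rewrite !ffunE eqxx.
  rewrite cardsD; congr (_ - _)%N.
  have /setIidPr -> : [set h y | y in W] \subset Dv (f a).
    apply/subsetP=> z /imsetP[y]; rewrite !inE => /andP[/andP[ya yX] /eqP fy] ->.
    rewrite -fy; apply: H1; by rewrite !inE ya.
  rewrite card_in_imset // => x y; rewrite !inE => /andP[/andP[xa xX] /eqP fx].
  move=> /andP[/andP[ya yX] /eqP fy] hxy; apply/eqP; apply/negPn/negP=> nxy.
  have := H3 x y; rewrite !inE xa xX ya yX fx fy => /(_ isT isT nxy erefl).
  by rewrite hxy eqxx.
move=> g; rewrite inE => /PXP[G1 G2 G3]; apply/PXP; split.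
- move=> x; rewrite !inE ffunE => /andP[/negbTE -> xX]; exact: G1.
- move=> x; rewrite !inE ffunE negb_and negbK; case: eqP => // _ /= xX; exact: G2.
- move=> x y; rewrite !inE !ffunE => /andP[/negbTE -> xX] /andP[/negbTE -> yX].
  exact: G3.
Qed.

Lemma count_all (X : {set gT}) :
  #|[set g | PX X g]| = (\prod_(c : gT) #|Dv c| ^_ #|X :&: Preim f c|)%N.
Proof.
have [n] := ubnP #|X|; elim: n X => // n IH X.
case: (set_0Vmem X) => [->|[a aX]].
  move=> _; rewrite big1 => [|c _]; last by rewrite set0I cards0 ffactn0.
  have -> : [set g | PX set0 g] = [set [ffun => 1%g]].
    apply/setP=> g; rewrite !inE; apply/PXP/eqP.
      case=> _ G2 _; apply/ffunP=> x; by rewrite ffunE G2 ?inE.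
    move=> ->; split=> x; rewrite ?inE ?ffunE //.
  by rewrite cards1.
move=> lt; rewrite (count_step aX) IH; last first.
  by rewrite (cardsD1 a X) aX add1n ltnS in lt.
rewrite (bigD1 (f a)) //= [in RHS](bigD1 (f a)) //=.
rewrite [in RHS]/= mulnAC; congr (_ * _)%N; last first.
  apply: eq_bigr => c /negbTE fc; congr (_ ^_ _); apply: eq_card => x.
  rewrite !inE; case: (x =P a) => [->|] //=.
  by rewrite [f a == c]eq_sym fc !andbF.
have -> : X :&: Preim f (f a) = a |: ((X :\ a) :&: Preim f (f a)).
  apply/setP=> x; rewrite !inE; case: (x =P a) => [->|]; by rewrite ?aX ?eqxx.
by rewrite cardsU1 !inE eqxx /= add1n ffactnSr.
Qed.

End Count.

Section Main.
Variable gT : finGroupType.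
Variable f : gT -> gT.
Local Open Scope group_scope.

Lemma ImfP (c : gT) : reflect (exists x, f x = c) (c \in Im f).
Proof. by apply: (iffP imsetP) => [[x _ ->]|[x <-]]; exists x. Qed.

Lemma Ag_mem (g : {ffun gT -> gT}) r c :
  ((r, c) \in Ag f g) = [exists x, (f x == c) && (g x * c == r)].
Proof.
rewrite inE /=; apply/andP/existsP => [[_ /existsP[x /andP[/eqP fx e]]]|[x /andP[/eqP fx e]]].
  by exists x; rewrite fx eqxx -fx.
split; first by apply/ImfP; exists x.
by apply/existsP; exists x; rewrite fx eqxx.
Qed.

Lemma Ag_sub (g : {ffun gT -> gT}) : Ag f g \subset setX [set: gT] (Im f).
Proof. by apply/subsetP=> [[r c]]; rewrite inE /= => /andP[cI _]; rewrite !inE. Qed.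

Lemma Ag_vals (g : {ffun gT -> gT}) : [set mentry p.1 p.2 | p in Ag f g] = Im g.
Proof.
apply/setP=> v; apply/imsetP/imsetP => [[[r c]]|[x _ ->]].
  rewrite Ag_mem => /existsP[x /andP[/eqP fx /eqP <-]] -> /=.
  by exists x; rewrite // /mentry mulgK.
exists (g x * f x, f x); last by rewrite /mentry /= mulgK.
by rewrite Ag_mem; apply/existsP; exists x; rewrite !eqxx.
Qed.

Lemma Ag_fst (g : {ffun gT -> gT}) :
  [set p.1 | p in Ag f g] = Im (fun x => g x * f x).
Proof.
apply/setP=> v; apply/imsetP/imsetP => [[[r c]]|[x _ ->]].
  rewrite Ag_mem => /existsP[x /andP[/eqP fx /eqP <-]] -> /=.
  by exists x; rewrite // fx.
exists (g x * f x, f x) => //.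
by rewrite Ag_mem; apply/existsP; exists x; rewrite !eqxx.
Qed.

Definition fibinj (g : {ffun gT -> gT}) :=
  forall x y, x != y -> f x = f y -> g x != g y.

Lemma goodg_inj S g : goodg f S g -> fibinj g.
Proof.
case/andP=> _ /forallP H x y nxy fxy; have /forallP := H x => /(_ y).
by rewrite nxy fxy eqxx.
Qed.

Lemma Ag_col (g : {ffun gT -> gT}) c : fibinj g ->
  #|[set r | (r, c) \in Ag f g]| = #|Preim f c|.
Proof.
move=> gi.
have -> : [set r | (r, c) \in Ag f g] = [set g x * c | x in Preim f c].
  apply/setP=> r; rewrite inE Ag_mem; apply/existsP/imsetP.
    by case=> x /andP[fx /eqP <-]; exists x; rewrite ?inE.
  by case=> x; rewrite inE => fx ->; exists x; rewrite fx eqxx.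
apply: card_in_imset => x y; rewrite !inE => /eqP fx /eqP fy /mulIg e.
apply/eqP; apply/negPn/negP => nxy; have := gi x y nxy; rewrite fx fy e.
by move=> /(_ erefl); rewrite eqxx.
Qed.

Lemma Ag_adm S (g : {ffun gT -> gT}) : goodg f S g -> admissible f (Ag f g) S.
Proof.
move=> gg; have gi := goodg_inj gg; case/andP: gg => /eqP IS _.
split; [exact: Ag_sub | by rewrite Ag_vals | by move=> c _; apply: Ag_col].
Qed.

Section Adm.
Variables (S : {set gT}) (A : {set gT * gT}).
Hypothesis adm : admissible f A S.

Definition Dv (c : gT) : {set gT} := [set v | (v * c, c) \in A].

Lemma cardDv c : #|Dv c| = #|Preim f c|.
Proof.
case: adm => Asub _ Acol.
have -> : Dv c = [set r * c^-1 | r in [set r | (r, c) \in A]].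
  apply/setP=> v; rewrite inE; apply/idP/imsetP.
    by move=> vA; exists (v * c); rewrite ?inE ?mulgK.
  by case=> r; rewrite inE => rA ->; rewrite mulgKV.
rewrite card_imset; last exact: (mulIg c^-1).
case: (boolP (c \in Im f)) => cI; first exact: Acol.
have -> : Preim f c = set0.
  apply/setP=> x; rewrite !inE; apply/negP=> /eqP fx; move/negP: cI; apply.
  by apply/ImfP; exists x.
rewrite cards0; apply/eqP; rewrite cards_eq0; apply/eqP/setP=> r; rewrite !inE.
apply/negP=> rA; move/subsetP: Asub => /(_ _ rA); rewrite !inE /=.
by rewrite (negbTE cI).
Qed.

Lemma key (g : {ffun gT -> gT}) : (goodg f S g && (Ag f g == A)) = PX f Dv setT g.
Proof.
case: adm => Asub Avals Acol.
apply/andP/PXP.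
  case=> gg /eqP gA; have gi := goodg_inj gg; split => //.
  - move=> x _; rewrite /Dv inE -gA Ag_mem; apply/existsP; exists x; by rewrite !eqxx.
  - by move=> x; rewrite inE.
  - by move=> x y _ _; apply: gi.
case=> H1 _ H3.
have gi : fibinj g by move=> x y; apply: H3; rewrite inE.
have AgA : Ag f g = A.
  have sub : Ag f g \subset A.
    apply/subsetP=> [[r c]]; rewrite Ag_mem => /existsP[x /andP[/eqP <- /eqP <-]].
    by have := H1 x (in_setT x); rewrite inE.
  apply/eqP; rewrite eqEsubset sub /=; apply/subsetP=> [[r c]] rA.
  have cI : c \in Im f by move/subsetP: Asub => /(_ _ rA); rewrite !inE.
  have : [set r | (r, c) \in Ag f g] == [set r | (r, c) \in A].
    rewrite eqEcard Ag_col // Acol // leqnn andbT.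
    apply/subsetP=> r'; rewrite [r' \in _]inE [r' \in _]inE. by apply: (subsetP sub).
  by move/eqP/setP/(_ r); rewrite !inE rA.
split; last by rewrite AgA.
apply/andP; split; first by rewrite -Ag_vals AgA Avals.
apply/forallP=> x; apply/forallP=> y; apply/implyP=> /andP[nxy /eqP fxy].
exact: gi.
Qed.

Lemma count_good :
  #|[set g : {ffun gT -> gT} | goodg f S g && (Ag f g == A)]| =
  (\prod_(c : gT) #|Preim f c|`!)%N.
Proof.
rewrite (eq_card (B := [set g | PX f Dv setT g])); last first.
  by move=> g; rewrite !inE key.
rewrite count_all; apply: eq_bigr => c _.
by rewrite setTI cardDv ffactnn.
Qed.

End Adm.

Lemma prod_fact :
  (\prod_(c : gT) #|Preim f c|`!)%N =
  (\prod_(1 <= t < (u f).+1) t`! ^ #|Pt f t|)%N.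
Proof.
rewrite (partition_big (fun c => inord #|Preim f c| : 'I_(u f).+1) xpredT) //=.
have -> : (\prod_(1 <= t < (u f).+1) t`! ^ #|Pt f t|)%N =
          (\prod_(0 <= t < (u f).+1) t`! ^ #|Pt f t|)%N.
  by rewrite [in RHS]big_ltn // fact0 exp1n mul1n.
rewrite big_mkord; apply: eq_bigr => j _.
rewrite -prod_nat_const; apply: eq_big => c.
  have hc : (#|Preim f c| < (u f).+1)%N by rewrite ltnS /u leq_bigmax.
  by rewrite inE -(inj_eq val_inj) /= inordK.
have hc : (#|Preim f c| < (u f).+1)%N by rewrite ltnS /u leq_bigmax.
by move=> /eqP <-; rewrite inordK.
Qed.

End Main.

Unset Implicit Arguments. Set Strict Implicit.
Local Open Scope group_scope.

Theorem lemma2p1 (gT : finGroupType) (f : gT -> gT) (S : {set gT}) :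
  (u f <= #|S|)%N ->
  [/\ (forall g : {ffun gT -> gT}, goodg f S g -> admissible f (Ag f g) S),
      (forall A : {set gT * gT}, admissible f A S ->
         exists g : {ffun gT -> gT}, goodg f S g /\ Ag f g = A),
      (forall A : {set gT * gT}, admissible f A S ->
         #|[set g : {ffun gT -> gT} | goodg f S g && (Ag f g == A)]|
           = (\prod_(1 <= t < (u f).+1) t`! ^ #|Pt f t|)%N)
    & (forall g h : {ffun gT -> gT}, goodg f S g -> goodg f S h ->
         Ag f g = Ag f h ->
         Im g = Im h /\ Im (fun x => g x * f x) = Im (fun x => h x * f x))].
Proof.
move=> _; split.
- by move=> g; apply: Ag_adm.
- move=> A adm.
  have : (0 < #|[set g : {ffun gT -> gT} | goodg f S g && (Ag f g == A)]|)%N.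
    by rewrite (count_good adm) prodn_gt0 // => c; apply: fact_gt0.
  rewrite card_gt0 => /set0Pn[g]; rewrite inE => /andP[gg /eqP gA].
  by exists g.
- by move=> A adm; rewrite (count_good adm) prod_fact.
- move=> g h _ _ e; by rewrite -(Ag_vals f g) e Ag_vals -(Ag_fst f g) e Ag_fst.
Qed.
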